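(* In the setting of the context, fix two distinct exposures $d_k\ne d_l$ and assume $\pi_{ij}(d_k,d_l)>0$ for all $i\ne j$. Define $$\widehat{\mathrm{Cov}}[\widehat{y^T_{HT}}(d_k),\widehat{y^T_{HT}}(d_l)] = \sum_{i\in U}\sum_{j\in U\setminus\{i\}}\frac{\mathbf{I}(D_i=d_k)\mathbf{I}(D_j=d_l)}{\pi_{ij}(d_k,d_l)}\,\frac{y_i(d_k)}{\pi_i(d_k)}\frac{y_j(d_l)}{\pi_j(d_l)}\big[\pi_{ij}(d_k,d_l)-\pi_i(d_k)\pi_j(d_l)\big] - \sum_{i\in U}\left[\frac{\mathbf{I}(D_i=d_k)y_i(d_k)^2}{2\pi_i(d_k)}+\frac{\mathbf{I}(D_i=d_l)y_i(d_l)^2}{2\pi_i(d_l)}\right].$$ Then $\mathrm{E}\big[\widehat{\mathrm{Cov}}[\widehat{y^T_{HT}}(d_k),\widehat{y^T_{HT}}(d_l)]\big]\le \mathrm{Cov}\big[\widehat{y^T_{HT}}(d_k),\widehat{y^T_{HT}}(d_l)\big]$, and equality holds if $y_i(d_k)=y_i(d_l)$ for all $i\in U$.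
   Context: A finite population $U$ of units $i=1,\dots,N$. A random treatment assignment vector $\mathbf{Z}$ takes values in $\Omega=\{\mathbf{z}\in\{1,\dots,M\}^N:p_{\mathbf{z}}>0\}$ with known probabilities $\Pr(\mathbf{Z}=\mathbf{z})=p_{\mathbf{z}}$. An exposure mapping $f:\Omega\times\Theta\to\Delta=\{d_1,\dots,d_K\}$ with unit traits $\theta_i$ gives exposures $D_i=f(\mathbf{Z},\theta_i)$. Write $\pi_i(d)=\Pr(D_i=d)$ and $\pi_{ij}(d,d')=\Pr(D_i=d,D_j=d')$; assume $0<\pi_i(d_k)<1$ for all $i,k$. Potential outcomes $y_i(d_1),\dots,y_i(d_K)$ are fixed real numbers; the observed outcome is $y_i(D_i)$. The Horvitz–Thompson total estimator is $\widehat{y^T_{HT}}(d)=\sum_{i=1}^N\mathbf{I}(D_i=d)\,y_i(d)/\pi_i(d)$. Expectations and covariances are with respect to the randomization distribution of $\mathbf{Z}$. *)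

(* Defs.v *)
From HB Require Import structures.
From mathcomp Require Import all_boot all_order all_algebra.
Set Implicit Arguments. Unset Strict Implicit. Unset Printing Implicit Defensive.
Import Order.TTheory GRing.Theory Num.Theory.
Local Open Scope ring_scope.

(* Treatment assignment vectors z in {1..M}^N, encoded as {ffun 'I_N -> 'I_M}. *)
Definition assignment (N M : nat) := {ffun 'I_N -> 'I_M}.

Definition exposure (N M : nat) (Theta Delta : Type)
  (f : assignment N M -> Theta -> Delta) (theta : 'I_N -> Theta)
  (z : assignment N M) (i : 'I_N) : Delta := f z (theta i).

Definition ind (R : numDomainType) (b : bool) : R := (b : nat)%:R.

Definition Expect (R : numDomainType) (T : finType) (p : T -> R) (X : T -> R) : R :=
  \sum_(z : T) p z * X z.

Definition Covar (R : numDomainType) (T : finType) (p : T -> R) (X Y : T -> R) : R :=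
  Expect p (fun z => X z * Y z) - Expect p X * Expect p Y.

Section Exposures.
Variables (R : realFieldType) (T : finType) (N : nat) (Delta : eqType).
Variable (p : T -> R) (D : T -> 'I_N -> Delta).

Definition pi1 (i : 'I_N) (d : Delta) : R := Expect p (fun z => ind R (D z i == d)).

Definition pi2 (i j : 'I_N) (d d' : Delta) : R :=
  Expect p (fun z => ind R ((D z i == d) && (D z j == d'))).

Variable (y : 'I_N -> Delta -> R).

Definition HT (d : Delta) (z : T) : R :=
  \sum_(i < N) ind R (D z i == d) * y i d / pi1 i d.

Definition CovHat (dk dl : Delta) (z : T) : R :=
  \sum_(i < N) \sum_(j < N | j != i)
     ind R (D z i == dk) * ind R (D z j == dl) / pi2 i j dk dl
     * (y i dk / pi1 i dk) * (y j dl / pi1 j dl)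
     * (pi2 i j dk dl - pi1 i dk * pi1 j dl)
  - \sum_(i < N) (ind R (D z i == dk) * y i dk ^+ 2 / (2 * pi1 i dk)
                  + ind R (D z i == dl) * y i dl ^+ 2 / (2 * pi1 i dl)).
End Exposures.

(* Main.v *)
Require Import Defs.
From HB Require Import structures.
From mathcomp Require Import all_boot all_order all_algebra.
From mathcomp Require Import ring lra.
Import Order.TTheory GRing.Theory Num.Theory.
Local Open Scope ring_scope.

Section H.
Variables (R : realFieldType) (T : finType) (p : T -> R).
Lemma Expect_ext (X Y : T -> R) : (forall z, X z = Y z) -> Expect p X = Expect p Y.
Proof. by move=> H; apply: eq_bigr => z _; rewrite H. Qed.
Lemma Expect_sumr (N : nat) (P : pred 'I_N) (F : 'I_N -> T -> R) :
  Expect p (fun z => \sum_(i < N | P i) F i z) = \sum_(i < N | P i) Expect p (F i).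
Proof.
rewrite /Expect exchange_big /=; apply: eq_bigr => z _; by rewrite mulr_sumr.
Qed.
Lemma Expect_scale (c : R) (X : T -> R) : Expect p (fun z => c * X z) = c * Expect p X.
Proof. rewrite /Expect mulr_sumr; apply: eq_bigr => z _; ring. Qed.
Lemma Expect_B (X Y : T -> R) : Expect p (fun z => X z - Y z) = Expect p X - Expect p Y.
Proof. rewrite /Expect -sumrB; apply: eq_bigr => z _; ring. Qed.
Lemma Expect_D (X Y : T -> R) : Expect p (fun z => X z + Y z) = Expect p X + Expect p Y.
Proof. rewrite /Expect -big_split; apply: eq_bigr => z _ /=; exact: mulrDr. Qed.
Lemma indA (a b : bool) : ind R (a && b) = ind R a * ind R b.
Proof. by case: a; case: b; rewrite /ind /= ?mulr1n ?mulr0n ?mul0r ?mulr0 ?mul1r. Qed.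
End H.
Section M.
Variables (R : realFieldType) (T : finType) (N : nat) (Delta : eqType).
Variables (p : T -> R) (D : T -> 'I_N -> Delta) (y : 'I_N -> Delta -> R).
Hypothesis pi_pos : forall i d, 0 < pi1 p D i d.

Lemma EHT d : Expect p (HT p D y d) = \sum_(i < N) y i d.
Proof.
rewrite (@Expect_ext _ _ p _ (fun z => \sum_(i < N) (y i d / pi1 p D i d) * ind R (D z i == d))); last first.
  by move=> z; rewrite /HT; apply: eq_bigr => i _; ring.
rewrite Expect_sumr; apply: eq_bigr => i _; rewrite Expect_scale -/(pi1 p D i d).
by rewrite divfK // gt_eqF.
Qed.

Lemma EHT2 dk dl : Expect p (fun z => HT p D y dk z * HT p D y dl z) =
  \sum_(i < N) \sum_(j < N) pi2 p D i j dk dl * ((y i dk / pi1 p D i dk) * (y j dl / pi1 p D j dl)).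
Proof.
rewrite (@Expect_ext _ _ p _ (fun z => \sum_(i < N) \sum_(j < N)
   ((y i dk / pi1 p D i dk) * (y j dl / pi1 p D j dl)) * ind R ((D z i == dk) && (D z j == dl)))); last first.
  move=> z; rewrite /HT mulr_suml; apply: eq_bigr => i _; rewrite mulr_sumr.
  apply: eq_bigr => j _; by rewrite indA; ring.
rewrite Expect_sumr; apply: eq_bigr => i _; rewrite Expect_sumr; apply: eq_bigr => j _.
by rewrite Expect_scale -/(pi2 p D i j dk dl) mulrC.
Qed.

Hypothesis (dk dl : Delta) (pi2_pos : forall i j : 'I_N, i != j -> 0 < pi2 p D i j dk dl).

Lemma ECovHat : Expect p (CovHat p D y dk dl) =
  \sum_(i < N) \sum_(j < N | j != i) (pi2 p D i j dk dl - pi1 p D i dk * pi1 p D j dl)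
     * ((y i dk / pi1 p D i dk) * (y j dl / pi1 p D j dl))
  - \sum_(i < N) (y i dk ^+ 2 / 2 + y i dl ^+ 2 / 2).
Proof.
rewrite (@Expect_ext _ _ p _ (fun z => \sum_(i < N) \sum_(j < N | j != i)
   ((pi2 p D i j dk dl - pi1 p D i dk * pi1 p D j dl)
     * ((y i dk / pi1 p D i dk) * (y j dl / pi1 p D j dl)) / pi2 p D i j dk dl)
     * ind R ((D z i == dk) && (D z j == dl))
  - \sum_(i < N) ((y i dk ^+ 2 / (2 * pi1 p D i dk)) * ind R (D z i == dk)
                  + (y i dl ^+ 2 / (2 * pi1 p D i dl)) * ind R (D z i == dl)))); last first.
  move=> z; rewrite /CovHat; congr (_ - _).
    by apply: eq_bigr => i _; apply: eq_bigr => j _; rewrite indA; ring.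
  by apply: eq_bigr => i _; ring.
rewrite Expect_B; congr (_ - _).
  rewrite Expect_sumr; apply: eq_bigr => i _; rewrite Expect_sumr; apply: eq_bigr => j ji.
  rewrite Expect_scale -/(pi2 p D i j dk dl) divfK // gt_eqF // pi2_pos //.
  by rewrite eq_sym.
rewrite Expect_sumr; apply: eq_bigr => i _; rewrite Expect_D !Expect_scale.
rewrite -/(pi1 p D i dk) -/(pi1 p D i dl).
have h1 := pi_pos i dk; have h2 := pi_pos i dl.
field; rewrite ?gt_eqF //.
Qed.
End M.
Lemma pi2_diag (R : realFieldType) (T : finType) (N : nat) (Delta : eqType)
  (p : T -> R) (D : T -> 'I_N -> Delta) i dk dl : dk != dl -> pi2 p D i i dk dl = 0.
Proof.
move=> hkl; rewrite /pi2 /Expect big1 // => z _.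
case: eqP => [->|] /=; last by rewrite /ind mulr0.
by rewrite (negbTE hkl) /ind mulr0.
Qed.

Theorem mainTheorem2 (R : realFieldType) (N M : nat) (Theta : Type) (Delta : finType)
  (p : assignment N M -> R)
  (p_ge0 : forall z, 0 <= p z)
  (p_sum1 : \sum_(z : assignment N M) p z = 1)
  (f : assignment N M -> Theta -> Delta) (theta : 'I_N -> Theta)
  (y : 'I_N -> Delta -> R)
  (pi_pos : forall i d, 0 < pi1 p (exposure f theta) i d)
  (pi_lt1 : forall i d, pi1 p (exposure f theta) i d < 1)
  (dk dl : Delta) (hkl : dk != dl)
  (pi2_pos : forall i j : 'I_N, i != j -> 0 < pi2 p (exposure f theta) i j dk dl) :
  let D := exposure f theta in
  Expect p (CovHat p D y dk dl) <= Covar p (HT p D y dk) (HT p D y dl) /\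
  ((forall i, y i dk = y i dl) ->
     Expect p (CovHat p D y dk dl) = Covar p (HT p D y dk) (HT p D y dl)).
Proof.
move=> D.
change (exposure f theta) with D in pi_pos.
change (exposure f theta) with D in pi2_pos.
have key : Covar p (HT p D y dk) (HT p D y dl) =
   Expect p (CovHat p D y dk dl) + \sum_(i < N) (y i dk - y i dl) ^+ 2 / 2.
  rewrite /Covar EHT2 !EHT // ECovHat //.
  rewrite mulr_suml.
  under [X in _ - X = _]eq_bigr => i _ do rewrite mulr_sumr.
  rewrite -sumrB -sumrB -big_split /=; apply: eq_bigr => i _.
  rewrite [X in X - _ = _](bigD1 i) //= [X in _ - X = _](bigD1 i) //= pi2_diag // mul0r add0r.
  have hi := pi_pos i dk; have hl := pi_pos i dl.
  have -> : \sum_(j < N | j != i) y i dk * y j dl =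
      \sum_(j < N | j != i) pi1 p D i dk * pi1 p D j dl *
          (y i dk / pi1 p D i dk * (y j dl / pi1 p D j dl)).
    apply: eq_bigr => j _; have hj := pi_pos j dl.
    by field; rewrite ?lt0r_neq0 ?pnatr_eq0.
  under [X in _ = X - _ + _]eq_bigr => j _ do rewrite mulrBl.
  rewrite sumrB.
  by field; rewrite ?lt0r_neq0 ?pnatr_eq0.
rewrite key; split.
  rewrite lerDl; apply: sumr_ge0 => i _.
  by apply: divr_ge0; [exact: sqr_ge0 | by []].
move=> hy; rewrite big1 ?addr0 // => i _.
by rewrite hy subrr expr0n /= mul0r.
Qed.
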